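(* Let $\gamma:[0,l]\times[0,w)\to E_1^4$, $(s,t)\mapsto\gamma(s,t)$, be a smooth inextensible one-parameter family of partially null curves in $E_1^4$ parametrized by arclength ($\|\partial\gamma/\partial s\|\equiv1$), with Frenet frame $\{T,N,B_1,B_2\}$, curvatures $k_1,k_2$ (and $k_3\equiv0$), and write $$\frac{\partial\gamma}{\partial t}=\beta_1T+\beta_2N+\beta_3B_1+\beta_4B_2$$ with smooth scalar functions $\beta_i$. Put $\psi_1=\langle\frac{\partial N}{\partial t},B_1\rangle$ and $\psi_3=\langle\frac{\partial B_1}{\partial t},B_2\rangle$. Then, at points where $\frac{\partial\beta_4}{\partial s}\neq0$, $$k_1=-\frac{\partial\psi_1/\partial s}{\partial\beta_4/\partial s},$$ and at points where $\psi_1\neq0$, $$k_2=\frac{1}{\psi_1}\frac{\partial\psi_3}{\partial s}.$$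
   Context: $E_1^4$ is $\mathbb{R}^4$ with the Lorentzian metric $\langle x,y\rangle=-x_1y_1+x_2y_2+x_3y_3+x_4y_4$ and $\|x\|=\sqrt{|\langle x,x\rangle|}$. A partially null curve is a spacelike curve whose first binormal is a null vector. For such a curve parametrized by arclength $s$, its Frenet frame $\{T,N,B_1,B_2\}$ ($T=\partial\gamma/\partial s$) satisfies $\langle T,T\rangle=\langle N,N\rangle=1$, $\langle B_1,B_1\rangle=\langle B_2,B_2\rangle=0$, $\langle B_1,B_2\rangle=1$, all other inner products zero, and the Frenet equations $T'=k_1N$, $N'=-k_1T+k_2B_1$, $B_1'=k_3B_1$, $B_2'=-k_2N-k_3B_2$, with $k_3\equiv0$. In the family, each $s\mapsto\gamma(s,t)$ is such a curve and frame and curvatures are smooth in $(s,t)$. The flow is inextensible if $\frac{\partial}{\partial t}\|\partial\gamma/\partial u\|=0$. *)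

(* Defs.v *)
From Stdlib Require Import Reals.
From Coquelicot Require Import Coquelicot.
Open Scope R_scope.

Record V4 := mkV { c1 : R; c2 : R; c3 : R; c4 : R }.

Definition vadd (x y : V4) : V4 :=
  mkV (c1 x + c1 y) (c2 x + c2 y) (c3 x + c3 y) (c4 x + c4 y).
Definition vscal (a : R) (x : V4) : V4 :=
  mkV (a * c1 x) (a * c2 x) (a * c3 x) (a * c4 x).

Definition linner (x y : V4) : R :=
  - c1 x * c1 y + c2 x * c2 y + c3 x * c3 y + c4 x * c4 y.
Definition lnorm (x : V4) : R := sqrt (Rabs (linner x x)).

Definition ds (f : R -> R -> R) (s t : R) : R := Derive (fun x => f x t) s.
Definition dt (f : R -> R -> R) (s t : R) : R := Derive (fun y => f s y) t.

Definition ds_v (X : R -> R -> V4) (s t : R) : V4 :=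
  mkV (ds (fun a b => c1 (X a b)) s t) (ds (fun a b => c2 (X a b)) s t)
      (ds (fun a b => c3 (X a b)) s t) (ds (fun a b => c4 (X a b)) s t).
Definition dt_v (X : R -> R -> V4) (s t : R) : V4 :=
  mkV (dt (fun a b => c1 (X a b)) s t) (dt (fun a b => c2 (X a b)) s t)
      (dt (fun a b => c3 (X a b)) s t) (dt (fun a b => c4 (X a b)) s t).

Fixpoint Cn_on (n : nat) (U : R * R -> Prop) (f : R -> R -> R) : Prop :=
  match n with
  | O => forall s t, U (s, t) -> continuous (fun p : R * R => f (fst p) (snd p)) (s, t)
  | S m =>
      (forall s t, U (s, t) -> continuous (fun p : R * R => f (fst p) (snd p)) (s, t)) /\
      (forall s t, U (s, t) -> ex_derive (fun x => f x t) s /\ ex_derive (fun y => f s y) t) /\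
      Cn_on m U (ds f) /\ Cn_on m U (dt f)
  end.

Definition smooth_on (U : R * R -> Prop) (f : R -> R -> R) : Prop :=
  forall n, Cn_on n U f.

Definition smooth_on_v (U : R * R -> Prop) (X : R -> R -> V4) : Prop :=
  smooth_on U (fun s t => c1 (X s t)) /\ smooth_on U (fun s t => c2 (X s t)) /\
  smooth_on U (fun s t => c3 (X s t)) /\ smooth_on U (fun s t => c4 (X s t)).

Definition in_dom (l w s t : R) : Prop := 0 <= s <= l /\ 0 <= t < w.

Definition pn_frame (T N B1 B2 : V4) : Prop :=
  linner T T = 1 /\ linner N N = 1 /\ linner B1 B1 = 0 /\ linner B2 B2 = 0 /\
  linner B1 B2 = 1 /\
  linner T N = 0 /\ linner T B1 = 0 /\ linner T B2 = 0 /\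
  linner N B1 = 0 /\ linner N B2 = 0.

(* Main.v *)
Require Import Defs.
From Stdlib Require Import Reals Lra.
From Coquelicot Require Import Coquelicot.
Import Defs.
Open Scope R_scope.

Definition Dv (X : R -> V4) x := mkV (Derive (fun y => c1 (X y)) x) (Derive (fun y => c2 (X y)) x)
  (Derive (fun y => c3 (X y)) x) (Derive (fun y => c4 (X y)) x).
Definition exv (X : R -> V4) x := ex_derive (fun y => c1 (X y)) x /\ ex_derive (fun y => c2 (X y)) x /\
  ex_derive (fun y => c3 (X y)) x /\ ex_derive (fun y => c4 (X y)) x.

Lemma Dv_linner X Y x : exv X x -> exv Y x ->
  Derive (fun y => linner (X y) (Y y)) x = linner (Dv X x) (Y x) + linner (X x) (Dv Y x).
Proof.
intros (H1&H2&H3&H4) (G1&G2&G3&G4).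
apply is_derive_unique. unfold linner, Dv; simpl.
set (x1 := fun y => c1 (X y)). set (x2 := fun y => c2 (X y)).
set (x3 := fun y => c3 (X y)). set (x4 := fun y => c4 (X y)).
set (y1 := fun y => c1 (Y y)). set (y2 := fun y => c2 (Y y)).
set (y3 := fun y => c3 (Y y)). set (y4 := fun y => c4 (Y y)).
change (is_derive (fun y => - x1 y * y1 y + x2 y * y2 y + x3 y * y3 y + x4 y * y4 y) x
  (- Derive x1 x * y1 x + Derive x2 x * y2 x + Derive x3 x * y3 x + Derive x4 x * y4 x +
   (- x1 x * Derive y1 x + x2 x * Derive y2 x + x3 x * Derive y3 x + x4 x * Derive y4 x))).
auto_derive; [tauto|].
change (Derive (fun y => x1 y) x) with (Derive x1 x).
change (Derive (fun y => x2 y) x) with (Derive x2 x).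
change (Derive (fun y => x3 y) x) with (Derive x3 x).
change (Derive (fun y => x4 y) x) with (Derive x4 x).
change (Derive (fun y => y1 y) x) with (Derive y1 x).
change (Derive (fun y => y2 y) x) with (Derive y2 x).
change (Derive (fun y => y3 y) x) with (Derive y3 x).
change (Derive (fun y => y4 y) x) with (Derive y4 x).
ring.
Qed.

Lemma exR_plus (f g : R -> R) x : ex_derive f x -> ex_derive g x -> ex_derive (fun y => f y + g y) x.
Proof. intros; auto_derive; tauto. Qed.
Lemma exR_mult (f g : R -> R) x : ex_derive f x -> ex_derive g x -> ex_derive (fun y => f y * g y) x.
Proof. intros; auto_derive; tauto. Qed.
Lemma exR_opp (f : R -> R) x : ex_derive f x -> ex_derive (fun y => - f y) x.
Proof. intros; auto_derive; tauto. Qed.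

Lemma exv_vadd X Y x : exv X x -> exv Y x -> exv (fun y => vadd (X y) (Y y)) x.
Proof.
intros (H1&H2&H3&H4) (G1&G2&G3&G4); unfold exv, vadd; simpl;
refine (conj _ (conj _ (conj _ _))); apply exR_plus; assumption.
Qed.

Lemma exv_vscal f X x : ex_derive f x -> exv X x -> exv (fun y => vscal (f y) (X y)) x.
Proof.
intros Hf (H1&H2&H3&H4); unfold exv, vscal; simpl;
refine (conj _ (conj _ (conj _ _))); apply exR_mult; assumption.
Qed.

Lemma Dv_vadd X Y x : exv X x -> exv Y x -> Dv (fun y => vadd (X y) (Y y)) x = vadd (Dv X x) (Dv Y x).
Proof.
intros (H1&H2&H3&H4) (G1&G2&G3&G4); unfold Dv, vadd; simpl; f_equal; apply Derive_plus; assumption.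
Qed.

Lemma Dv_vscal f X x : ex_derive f x -> exv X x ->
  Dv (fun y => vscal (f y) (X y)) x = vadd (vscal (Derive f x) (X x)) (vscal (f x) (Dv X x)).
Proof.
intros Hf (H1&H2&H3&H4); unfold Dv, vadd, vscal; simpl; f_equal; apply Derive_mult; assumption.
Qed.

Lemma linner_vadd_l X Y Z : linner (vadd X Y) Z = linner X Z + linner Y Z.
Proof. unfold linner, vadd; simpl; ring. Qed.
Lemma linner_vadd_r X Y Z : linner Z (vadd X Y) = linner Z X + linner Z Y.
Proof. unfold linner, vadd; simpl; ring. Qed.
Lemma linner_vscal_l a X Z : linner (vscal a X) Z = a * linner X Z.
Proof. unfold linner, vscal; simpl; ring. Qed.
Lemma linner_vscal_r a X Z : linner Z (vscal a X) = a * linner Z X.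
Proof. unfold linner, vscal; simpl; ring. Qed.
Lemma linner_sym X Y : linner X Y = linner Y X.
Proof. unfold linner; ring. Qed.

Definition nbhd (P : R -> Prop) x := exists e, 0 < e /\
  ((forall y, x <= y < x + e -> P y) \/ (forall y, x - e < y <= x -> P y)).

Lemma Derive_loc (P : R -> Prop) f g x : nbhd P x -> (forall y, P y -> f y = g y) ->
  ex_derive f x -> ex_derive g x -> Derive f x = Derive g x.
Proof.
intros [e [He Hn]] Heq Hf Hg.
assert (Hd : is_derive (fun y => f y - g y) x (Derive f x - Derive g x)).
{ auto_derive; [tauto|].
  change (Derive (fun y => f y) x) with (Derive f x).
  change (Derive (fun y => g y) x) with (Derive g x). ring. }
apply is_derive_Reals in Hd.
set (d := Derive f x - Derive g x) in *.
destruct (Req_dec d 0) as [Hz|Hnz]; [unfold d in Hz; lra|exfalso].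
assert (Hpos : 0 < Rabs d / 2) by (apply Rabs_pos_lt in Hnz; lra).
destruct (Hd _ Hpos) as [delta Hdel].
assert (Hdp := cond_pos delta).
set (m := Rmin delta e / 2).
assert (Hm : 0 < m) by (unfold m; assert (0 < Rmin delta e) by (apply Rmin_glb_lt; lra); lra).
assert (Hm2 : m < delta /\ m < e) by (unfold m; split; [assert (Rmin delta e <= delta) by apply Rmin_l|assert (Rmin delta e <= e) by apply Rmin_r]; lra).
destruct Hn as [Hn|Hn].
- assert (Hx : P x) by (apply Hn; lra).
  assert (Hxm : P (x + m)) by (apply Hn; lra).
  assert (H := Hdel m ltac:(lra) ltac:(rewrite Rabs_right; lra)).
  rewrite (Heq _ Hx), (Heq _ Hxm) in H.
  replace ((g (x + m) - g (x + m) - (g x - g x)) / m - d) with (- d) in H by (field; lra).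
  rewrite Rabs_Ropp in H. lra.
- assert (Hx : P x) by (apply Hn; lra).
  assert (Hxm : P (x + - m)) by (apply Hn; lra).
  assert (H := Hdel (- m) ltac:(lra) ltac:(rewrite Rabs_left; lra)).
  rewrite (Heq _ Hx), (Heq _ Hxm) in H.
  replace ((g (x + - m) - g (x + - m) - (g x - g x)) / - m - d) with (- d) in H by (field; lra).
  rewrite Rabs_Ropp in H. lra.
Qed.

Lemma Dv_loc (P : R -> Prop) X Y x : nbhd P x -> (forall y, P y -> X y = Y y) ->
  exv X x -> exv Y x -> Dv X x = Dv Y x.
Proof.
intros Hn Heq (H1&H2&H3&H4) (G1&G2&G3&G4); unfold Dv; f_equal;
  (eapply Derive_loc; [exact Hn| |assumption|assumption]); intros y Hy; rewrite (Heq y Hy); reflexivity.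
Qed.

Lemma Derive_loc0 (P : R -> Prop) f c x : nbhd P x -> (forall y, P y -> f y = c) ->
  ex_derive f x -> Derive f x = 0.
Proof.
intros Hn Heq Hf. rewrite (Derive_loc P f (fun _ => c) x Hn Heq Hf (ex_derive_const _ _)).
apply Derive_const.
Qed.

Lemma sm_ex U f s t : smooth_on U f -> U (s, t) ->
  ex_derive (fun x => f x t) s /\ ex_derive (fun y => f s y) t.
Proof. intros H HU. destruct (H 1%nat) as (_&H1&_). exact (H1 s t HU). Qed.
Lemma sm_dt U f : smooth_on U f -> smooth_on U (dt f).
Proof. intros H n. destruct (H (S n)) as (_&_&_&H1). exact H1. Qed.
Lemma sm_ds U f : smooth_on U f -> smooth_on U (ds f).
Proof. intros H n. destruct (H (S n)) as (_&_&H1&_). exact H1. Qed.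

Lemma smv_exs U X s t : smooth_on_v U X -> U (s, t) -> exv (fun a => X a t) s.
Proof. intros (H1&H2&H3&H4) HU; refine (conj _ (conj _ (conj _ _))); [apply (sm_ex _ _ _ _ H1 HU)|apply (sm_ex _ _ _ _ H2 HU)|apply (sm_ex _ _ _ _ H3 HU)|apply (sm_ex _ _ _ _ H4 HU)]. Qed.
Lemma smv_ext U X s t : smooth_on_v U X -> U (s, t) -> exv (fun b => X s b) t.
Proof. intros (H1&H2&H3&H4) HU; refine (conj _ (conj _ (conj _ _))); [apply (sm_ex _ _ _ _ H1 HU)|apply (sm_ex _ _ _ _ H2 HU)|apply (sm_ex _ _ _ _ H3 HU)|apply (sm_ex _ _ _ _ H4 HU)]. Qed.
Lemma smv_dt U X : smooth_on_v U X -> smooth_on_v U (dt_v X).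
Proof. intros (H1&H2&H3&H4); repeat split; apply sm_dt; assumption. Qed.
Lemma smv_ds U X : smooth_on_v U X -> smooth_on_v U (ds_v X).
Proof. intros (H1&H2&H3&H4); repeat split; apply sm_ds; assumption. Qed.

Lemma schwarz_U U f s t : open U -> smooth_on U f -> U (s, t) -> ds (dt f) s t = dt (ds f) s t.
Proof.
intros HO HS HU.
destruct (HS 2%nat) as (_&Hp&(_&Hps&Hss&Hts)&(_&Hpt&Hst&Htt)).
assert (HL : locally_2d (fun u v => U (u, v)) s t).
{ apply locally_2d_locally. apply (locally_open U (fun z => U (fst z, snd z)) HO); [|exact HU].
  intros [a b]; simpl; auto. }
unfold ds, dt.
apply Schwarz.
- destruct HL as [del Hdel]. exists del. intros u v Hu Hv.
  assert (HUu := Hdel u v Hu Hv).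
  destruct (Hp u v HUu) as [A B]. destruct (Hpt u v HUu) as [C _]. destruct (Hps u v HUu) as [_ D].
  repeat split; assumption.
- apply continuity_2d_pt_filterlim. exact (Hst s t HU).
- apply continuity_2d_pt_filterlim. exact (Hts s t HU).
Qed.

Lemma schwarz_v U X s t : open U -> smooth_on_v U X -> U (s, t) ->
  Dv (fun a => dt_v X a t) s = Dv (fun b => ds_v X s b) t.
Proof.
intros HO (H1&H2&H3&H4) HU. unfold Dv. simpl. f_equal; apply (schwarz_U U); assumption.
Qed.
Lemma exv_linner X Y x : exv X x -> exv Y x -> ex_derive (fun y => linner (X y) (Y y)) x.
Proof.
intros (H1&H2&H3&H4) (G1&G2&G3&G4). unfold linner.
apply exR_plus; [apply exR_plus; [apply exR_plus; [apply exR_mult; [apply exR_opp; assumption|assumption] | apply exR_mult; assumption] | apply exR_mult; assumption] | apply exR_mult; assumption].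
Qed.

Lemma Dv_comb2 f X g Y x : ex_derive f x -> exv X x -> ex_derive g x -> exv Y x ->
 Dv (fun y => vadd (vscal (f y) (X y)) (vscal (g y) (Y y))) x =
 vadd (vadd (vscal (Derive f x) (X x)) (vscal (f x) (Dv X x)))
      (vadd (vscal (Derive g x) (Y x)) (vscal (g x) (Dv Y x))).
Proof.
intros. rewrite Dv_vadd by (apply exv_vscal; assumption).
rewrite !Dv_vscal by assumption. reflexivity.
Qed.

Lemma Dv_comb4 f1 X1 f2 X2 f3 X3 f4 X4 x :
 ex_derive f1 x -> exv X1 x -> ex_derive f2 x -> exv X2 x ->
 ex_derive f3 x -> exv X3 x -> ex_derive f4 x -> exv X4 x ->
 Dv (fun y => vadd (vadd (vscal (f1 y) (X1 y)) (vscal (f2 y) (X2 y)))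
                   (vadd (vscal (f3 y) (X3 y)) (vscal (f4 y) (X4 y)))) x =
 vadd (vadd (vadd (vscal (Derive f1 x) (X1 x)) (vscal (f1 x) (Dv X1 x)))
            (vadd (vscal (Derive f2 x) (X2 x)) (vscal (f2 x) (Dv X2 x))))
      (vadd (vadd (vscal (Derive f3 x) (X3 x)) (vscal (f3 x) (Dv X3 x)))
            (vadd (vscal (Derive f4 x) (X4 x)) (vscal (f4 x) (Dv X4 x)))).
Proof.
intros. rewrite Dv_vadd by (apply exv_vadd; apply exv_vscal; assumption).
rewrite !Dv_comb2 by assumption. reflexivity.
Qed.

Theorem theorem3p8
  (l w : R) (U : R * R -> Prop)
  (gam T N B1 B2 : R -> R -> V4)
  (k1 k2 b1 b2 b3 b4 : R -> R -> R) :
  0 < l -> 0 < w ->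
  open U ->
  (forall s t, in_dom l w s t -> U (s, t)) ->
  smooth_on_v U gam -> smooth_on_v U T -> smooth_on_v U N ->
  smooth_on_v U B1 -> smooth_on_v U B2 ->
  smooth_on U k1 -> smooth_on U k2 ->
  smooth_on U b1 -> smooth_on U b2 -> smooth_on U b3 -> smooth_on U b4 ->
  (forall s t, in_dom l w s t ->
     lnorm (ds_v gam s t) = 1 /\
     T s t = ds_v gam s t /\
     pn_frame (T s t) (N s t) (B1 s t) (B2 s t) /\
     ds_v T s t = vscal (k1 s t) (N s t) /\
     ds_v N s t = vadd (vscal (- k1 s t) (T s t)) (vscal (k2 s t) (B1 s t)) /\
     ds_v B1 s t = vscal 0 (B1 s t) /\
     ds_v B2 s t = vadd (vscal (- k2 s t) (N s t)) (vscal (- 0) (B2 s t)) /\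
     dt (fun a b => lnorm (ds_v gam a b)) s t = 0 /\
     dt_v gam s t =
       vadd (vadd (vscal (b1 s t) (T s t)) (vscal (b2 s t) (N s t)))
            (vadd (vscal (b3 s t) (B1 s t)) (vscal (b4 s t) (B2 s t)))) ->
  forall s t, in_dom l w s t ->
    (ds b4 s t <> 0 ->
       k1 s t = - ds (fun a b => linner (dt_v N a b) (B1 a b)) s t / ds b4 s t) /\
    (linner (dt_v N s t) (B1 s t) <> 0 ->
       k2 s t = / linner (dt_v N s t) (B1 s t) *
                ds (fun a b => linner (dt_v B1 a b) (B2 a b)) s t).
Proof.
intros Hl Hw HO HD Hg HT HN HB1 HB2 Hk1 Hk2 Hb1 Hb2 Hb3 Hb4 HF s t Hst.
assert (HU := HD s t Hst).
assert (Ht : nbhd (fun y => in_dom l w s y) t).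
{ exists (w - t). unfold in_dom in *. split; [lra|]. left. intros y Hy; lra. }
assert (Hs : nbhd (fun y => in_dom l w y t) s).
{ unfold in_dom in *. destruct (Rlt_or_le s l) as [Hsl|Hsl].
  - exists (l - s). split; [lra|]. left. intros y Hy; lra.
  - exists l. split; [lra|]. right. intros y Hy; lra. }
destruct (HF s t Hst) as (Hn1&HTg&Hfr&HdT&HdN&HdB1&HdB2&Hin&Hgam).
destruct Hfr as (TT&NN&B1B1&B2B2&B1B2&TN&TB1&TB2&NB1&NB2).
assert (eT_t := smv_ext U T s t HT HU).
assert (eN_t := smv_ext U N s t HN HU).
assert (eB1_t := smv_ext U B1 s t HB1 HU).
assert (eB2_t := smv_ext U B2 s t HB2 HU).
assert (eT_s := smv_exs U T s t HT HU).
assert (eN_s := smv_exs U N s t HN HU).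
assert (eB1_s := smv_exs U B1 s t HB1 HU).
assert (eB2_s := smv_exs U B2 s t HB2 HU).
assert (hB1t : linner (Dv (fun b => B1 s b) t) (B1 s t) = 0).
{ assert (E := Dv_linner _ _ _ eB1_t eB1_t).
  rewrite (Derive_loc0 _ _ 0 _ Ht) in E.
  - rewrite (linner_sym (B1 s t)) in E. lra.
  - intros y Hy. destruct (HF s y Hy) as (_&_&(_&_&X&_)&_). exact X.
  - apply exv_linner; assumption. }
assert (hB1N : linner (Dv (fun b => B1 s b) t) (N s t) + linner (B1 s t) (Dv (fun b => N s b) t) = 0).
{ rewrite <- (Dv_linner _ _ _ eB1_t eN_t).
  apply (Derive_loc0 _ _ 0 _ Ht).
  - intros y Hy. destruct (HF s y Hy) as (_&_&(_&_&_&_&_&_&_&_&X&_)&_). rewrite linner_sym. exact X.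
  - apply exv_linner; assumption. }
assert (hTt : linner (Dv (fun b => T s b) t) (B1 s t) = ds b4 s t).
{ assert (eg := smv_ext U _ s t (smv_ds U gam Hg) HU).
  rewrite (Dv_loc _ _ (fun b => ds_v gam s b) _ Ht) by
    (try (intros y Hy; destruct (HF s y Hy) as (_&X&_); exact X); assumption).
  rewrite <- (schwarz_v U gam s t HO Hg HU).
  assert (egs := smv_exs U _ s t (smv_dt U gam Hg) HU).
  assert (ex : forall f, smooth_on U f -> ex_derive (fun a => f a t) s)
    by (intros f Hf; exact (proj1 (sm_ex U f s t Hf HU))).
  rewrite (Dv_loc _ _ (fun a => vadd (vadd (vscal (b1 a t) (T a t)) (vscal (b2 a t) (N a t)))
            (vadd (vscal (b3 a t) (B1 a t)) (vscal (b4 a t) (B2 a t)))) _ Hs).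
  2: intros y Hy; destruct (HF y t Hy) as (_&_&_&_&_&_&_&_&X); exact X.
  2: exact egs.
  2: apply exv_vadd; apply exv_vadd; apply exv_vscal;
       first [exact eT_s | exact eN_s | exact eB1_s | exact eB2_s | apply ex; assumption].
  rewrite (Dv_comb4 (fun a => b1 a t) (fun a => T a t) (fun a => b2 a t) (fun a => N a t)
     (fun a => b3 a t) (fun a => B1 a t) (fun a => b4 a t) (fun a => B2 a t));
     first [exact eT_s | exact eN_s | exact eB1_s | exact eB2_s | apply ex; assumption | idtac].
  change (Dv (fun a => T a t) s) with (ds_v T s t).
  change (Dv (fun a => N a t) s) with (ds_v N s t).
  change (Dv (fun a => B1 a t) s) with (ds_v B1 s t).
  change (Dv (fun a => B2 a t) s) with (ds_v B2 s t).
  rewrite HdT, HdN, HdB1, HdB2.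
  repeat (rewrite linner_vadd_l || rewrite linner_vscal_l).
  rewrite TB1, NB1, B1B1, (linner_sym (B2 s t)), B1B2.
  unfold ds. match goal with |- context [?d * 1] => transitivity d end; [ring|reflexivity]. }
split.
- intro Hb.
  assert (hpsi : ds (fun a b => linner (dt_v N a b) (B1 a b)) s t = - k1 s t * ds b4 s t).
  { unfold ds at 1.
    rewrite (Dv_linner (fun a => dt_v N a t) (fun a => B1 a t) s
               (smv_exs U _ s t (smv_dt U N HN) HU) eB1_s).
    change (Dv (fun a => B1 a t) s) with (ds_v B1 s t). rewrite HdB1.
    rewrite (schwarz_v U N s t HO HN HU).
    rewrite (Dv_loc _ _ (fun b => vadd (vscal (- k1 s b) (T s b)) (vscal (k2 s b) (B1 s b))) _ Ht).
    2: intros y Hy; destruct (HF s y Hy) as (_&_&_&_&X&_); exact X.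
    2: exact (smv_ext U _ s t (smv_ds U N HN) HU).
    2: apply exv_vadd; apply exv_vscal;
       [apply exR_opp; exact (proj2 (sm_ex U _ s t Hk1 HU)) | exact eT_t
       | exact (proj2 (sm_ex U _ s t Hk2 HU)) | exact eB1_t].
    rewrite (Dv_comb2 (fun b => - k1 s b) (fun b => T s b) (k2 s) (fun b => B1 s b));
       [ | apply exR_opp; exact (proj2 (sm_ex U _ s t Hk1 HU)) | exact eT_t
       | exact (proj2 (sm_ex U _ s t Hk2 HU)) | exact eB1_t].
    repeat (rewrite linner_vadd_l || rewrite linner_vscal_l || rewrite linner_vscal_r).
    rewrite TB1, B1B1, hB1t, hTt. ring. }
  rewrite hpsi. field. exact Hb.
- intro Hp.
  assert (hpsi : ds (fun a b => linner (dt_v B1 a b) (B2 a b)) s t = k2 s t * linner (dt_v N s t) (B1 s t)).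
  { unfold ds at 1.
    rewrite (Dv_linner (fun a => dt_v B1 a t) (fun a => B2 a t) s
               (smv_exs U _ s t (smv_dt U B1 HB1) HU) eB2_s).
    change (Dv (fun a => B2 a t) s) with (ds_v B2 s t). rewrite HdB2.
    rewrite (schwarz_v U B1 s t HO HB1 HU).
    rewrite (Dv_loc _ _ (fun b => vscal ((fun _ => 0) b) (B1 s b)) _ Ht).
    2: intros y Hy; destruct (HF s y Hy) as (_&_&_&_&_&X&_); exact X.
    2: exact (smv_ext U _ s t (smv_ds U B1 HB1) HU).
    2: apply exv_vscal; [apply ex_derive_const|exact eB1_t].
    rewrite Dv_vscal; [|apply ex_derive_const|exact eB1_t].
    rewrite Derive_const.
    change (dt_v B1 s t) with (Dv (fun b => B1 s b) t).
    change (dt_v N s t) with (Dv (fun b => N s b) t).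
    repeat (rewrite linner_vadd_l || rewrite linner_vscal_l || rewrite linner_vadd_r || rewrite linner_vscal_r).
    rewrite (linner_sym (Dv (fun b => N s b) t)).
    replace (linner (Dv (fun b => B1 s b) t) (N s t)) with (- linner (B1 s t) (Dv (fun b => N s b) t)) by lra.
    ring. }
  rewrite hpsi. field. exact Hp.
Qed.
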